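(* For any word $w=z_{k_1}\cdots z_{k_n}$ of length $n\geq 1$ and weight $k=k_1+\cdots+k_n$, \[\frac{d}{dt}S^t(C(w))=\begin{cases}0&(n=1),\\ S^t(C(\delta(w)))&(n\geq 2),\end{cases}\qquad \frac{d}{dt}S^t(\Sigma(w))=\begin{cases}(k-1)z_{k+1}&(n=1),\\ S^t(\Sigma(\delta(w)))-S^t(C(w))&(n\geq 2).\end{cases}\]
   Context: Multiple zeta setting: $\mathfrak{h}^1$ is the non-commutative polynomial algebra over $\mathbb{Q}$ in letters $z_k$ ($k\geq1$), with $z_k\circ z_l=z_{k+l}$ on the span of letters, acting on words by $a\circ 1=0$, $a\circ(bw)=(a\circ b)w$. For an indeterminate $t$, the $\mathbb{Q}[t]$-linear operator $S^t$ on $\mathfrak{h}^1[t]$ is defined by $S^t(1)=1$, $S^t(aw)=aS^t(w)+t\,a\circ S^t(w)$. For a word $w=z_{k_1}\cdots z_{k_n}$ with $n\geq1$, define $C(w)=\sum_{l=1}^n z_{k_l+1}z_{k_{l+1}}\cdots z_{k_n}z_{k_1}\cdots z_{k_{l-1}}$, $\Sigma(w)=\sum_{l=1}^n\sum_{j=1}^{k_l-1}z_{k_l+1-j}z_{k_{l+1}}\cdots z_{k_n}z_{k_1}\cdots z_{k_{l-1}}z_j$, and, if $n\geq 2$ (with $k_{n+1}:=k_1$), $\delta(w)=\sum_{l=1}^n z_{k_l+k_{l+1}}z_{k_{l+2}}\cdots z_{k_n}z_{k_1}\cdots z_{k_{l-1}}$ (for $l=n$ this is $z_{k_n+k_1}z_{k_2}\cdots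 z_{k_{n-1}}$). These are extended $\mathbb{Q}[t]$-linearly. *)

(* Defs.v *)
From HB Require Import structures.
From mathcomp Require Import all_boot all_order all_algebra.
Set Implicit Arguments. Unset Strict Implicit. Unset Printing Implicit Defensive.
Import GRing.Theory.
Local Open Scope ring_scope.

(* A word z_{k_1}...z_{k_n} is the sequence [:: k_1; ...; k_n] (letters have
   indices k >= 1; the empty sequence is the empty word 1).
   An element of h^1[t] is represented as a formal Q[t]-linear combination,
   i.e. a finite list of (coefficient, word) pairs; two representations denote
   the same element iff every word has the same total coefficient. *)
Definition word := seq nat.
Definition elt := seq ({poly rat} * word).

Definition coefw (x : elt) (u : word) : {poly rat} :=
  \sum_(p <- x | p.2 == u) p.1.

Definition eqv (x y : elt) : Prop := forall u : word, coefw x u = coefw y u.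

Definition scale (c : {poly rat}) (x : elt) : elt := [seq (c * p.1, p.2) | p <- x].

Definition linext (f : word -> elt) (x : elt) : elt :=
  flatten [seq scale p.1 (f p.2) | p <- x].

Definition circ (a : nat) (x : elt) : elt :=
  flatten [seq (match p.2 with
                | [::] => [::]
                | b :: u => [:: (p.1, (a + b)%N :: u)]
                end) | p <- x].

Fixpoint Stw (w : word) : elt :=
  match w with
  | [::] => [:: (1, [::])]
  | a :: w' =>
      [seq (p.1, a :: p.2) | p <- Stw w'] ++ scale 'X (circ a (Stw w'))
  end.

Definition St (x : elt) : elt := linext Stw x.

Definition ddt (x : elt) : elt := [seq (p.1^`(), p.2) | p <- x].

(* C(w) : sum over l of z_{k_l+1} z_{k_{l+1}}...z_{k_n} z_{k_1}...z_{k_{l-1}};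
   rot i w = k_{i+1} ... k_n k_1 ... k_i. *)
Definition Cw (w : word) : elt :=
  [seq (1, (head 0%N (rot i w)).+1 :: behead (rot i w)) | i <- iota 0 (size w)].

Definition Sigmaw (w : word) : elt :=
  flatten [seq [seq (1, ((head 0%N (rot i w)).+1 - j)%N :: rcons (behead (rot i w)) j)
               | j <- iota 1 (head 0%N (rot i w)).-1]
          | i <- iota 0 (size w)].

(* delta(w), for n >= 2 (k_{n+1} := k_1) *)
Definition deltaw (w : word) : elt :=
  [seq (1, (nth 0%N (rot i w) 0 + nth 0%N (rot i w) 1)%N :: drop 2 (rot i w))
  | i <- iota 0 (size w)].

Definition C (x : elt) : elt := linext Cw x.
Definition Sigma (x : elt) : elt := linext Sigmaw x.
Definition wordelt (w : word) : elt := [:: (1, w)].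

(* Main.v *)
Require Import Defs.
From mathcomp Require Import all_boot all_order all_algebra.
From mathcomp Require Import zify ring.
Import GRing.Theory.
Local Open Scope ring_scope.

Definition pr (x : elt) (G : word -> {poly rat}) : {poly rat} :=
  \sum_(p <- x) p.1 * G p.2.

Lemma pr_nil G : pr [::] G = 0.
Proof. by rewrite /pr big_nil. Qed.

Lemma pr_cat x y G : pr (x ++ y) G = pr x G + pr y G.
Proof. by rewrite /pr big_cat. Qed.

Lemma pr_ext x G G' : G =1 G' -> pr x G = pr x G'.
Proof. by move=> e; apply: eq_bigr => p _; rewrite e. Qed.

Lemma pr_scale c x G : pr (scale c x) G = c * pr x G.
Proof.
rewrite /pr /scale big_map mulr_sumr; apply: eq_bigr => p _ /=; by rewrite mulrA.
Qed.

Lemma pr_linext f x G : pr (linext f x) G = \sum_(p <- x) p.1 * pr (f p.2) G.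
Proof.
elim: x => [|p x IH]; first by rewrite /linext /= pr_nil big_nil.
by rewrite /linext /= pr_cat pr_scale big_cons -IH.
Qed.

Lemma pr_cons a x G : pr [seq (p.1, a :: p.2) | p <- x] G = pr x (fun v => G (a :: v)).
Proof. by rewrite /pr big_map. Qed.

Definition circG (a : nat) (G : word -> {poly rat}) (v : word) : {poly rat} :=
  match v with [::] => 0 | b :: u => G ((a + b)%N :: u) end.

Lemma pr_circ a x G : pr (circ a x) G = pr x (circG a G).
Proof.
elim: x => [|[c v] x IH]; first by rewrite /circ /= pr_nil /pr big_nil.
rewrite /circ /= pr_cat -/(circ a x) IH /pr big_cons /=.
case: v => [|b u] /=; first by rewrite big_nil mulr0 !add0r.
by rewrite big_cons big_nil addr0.
Qed.

Lemma ddt_cat x y : ddt (x ++ y) = ddt x ++ ddt y.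
Proof. by rewrite /ddt map_cat. Qed.

Lemma ddt_cons a x : ddt [seq (p.1, a :: p.2) | p <- x] = [seq (p.1, a :: p.2) | p <- ddt x].
Proof. by rewrite /ddt -!map_comp. Qed.

Lemma ddt_circ a x : ddt (circ a x) = circ a (ddt x).
Proof.
elim: x => [|[c v] x IH] //.
rewrite /circ /= ddt_cat -/(circ a x) -/(circ a (ddt x)) IH.
by case: v.
Qed.

Lemma pr_ddt_scale c x G : pr (ddt (scale c x)) G = c^`() * pr x G + c * pr (ddt x) G.
Proof.
rewrite /pr /ddt /scale -map_comp big_map big_map !mulr_sumr -big_split /=.
apply: eq_bigr => p _; by rewrite derivM mulrDl !mulrA.
Qed.

Lemma pr_ddt_linext f x G :
  pr (ddt (linext f x)) G = \sum_(p <- x) (p.1^`() * pr (f p.2) G + p.1 * pr (ddt (f p.2)) G).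
Proof.
elim: x => [|p x IH]; first by rewrite /linext /= pr_nil big_nil.
by rewrite /linext /= ddt_cat pr_cat pr_ddt_scale big_cons -IH.
Qed.

Definition F (v : word) G := pr (Stw v) G.
Definition D (v : word) G := pr (ddt (Stw v)) G.

Lemma F_ext v G G' : G =1 G' -> F v G = F v G'.
Proof. exact: pr_ext. Qed.
Lemma D_ext v G G' : G =1 G' -> D v G = D v G'.
Proof. exact: pr_ext. Qed.

Lemma F_nil G : F [::] G = G [::].
Proof. by rewrite /F /pr /= big_cons big_nil mul1r addr0. Qed.

Lemma D_nil G : D [::] G = 0.
Proof. by rewrite /D /pr /= big_cons big_nil derivC mul0r addr0. Qed.

Lemma F_cons a v G : F (a :: v) G = F v (fun u => G (a :: u)) + 'X * F v (circG a G).
Proof. by rewrite /F /= pr_cat pr_cons pr_scale pr_circ. Qed.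

Lemma D_cons a v G : D (a :: v) G =
  D v (fun u => G (a :: u)) + F v (circG a G) + 'X * D v (circG a G).
Proof.
rewrite /D /F /= ddt_cat ddt_cons pr_cat pr_cons pr_ddt_scale derivX mul1r.
by rewrite ddt_circ !pr_circ addrA.
Qed.

Definition mergew (p : nat) (v : word) : word :=
  take p v ++ (nth 0%N v p + nth 0%N v p.+1)%N :: drop p.+2 v.
Definition dS (v : word) : seq word := [seq mergew p v | p <- iota 0 (size v).-1].

Lemma lemA v G : D v G = \sum_(u <- dS v) F u G.
Proof.
elim: v G => [|a v IH] G; first by rewrite D_nil /dS big_nil.
rewrite D_cons !IH.
case: v IH => [|b v] IH.
  by rewrite /dS /= !big_nil F_nil /= mulr0 !addr0.
have -> : dS [:: a, b & v] = ((a + b)%N :: v) :: [seq a :: u | u <- dS (b :: v)].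
  rewrite /dS /= -map_comp -[1%N]/(1 + 0)%N iotaDl -map_comp.
  by congr (_ :: _); rewrite /mergew /= drop0.
rewrite (big_cons 0 +%R) (big_map (cons a)).
have -> : \sum_(j <- dS (b :: v)) F (a :: j) G =
   \sum_(u <- dS (b :: v)) F u (fun u0 : seq nat => G (a :: u0)) +
   'X * \sum_(u <- dS (b :: v)) F u (circG a G).
  by rewrite mulr_sumr -big_split; apply: eq_bigr => u _; rewrite F_cons.
rewrite [F (b :: v) _]F_cons [F (_ :: v) G]F_cons.
have -> : F v (circG b (circG a G)) = F v (circG (a + b) G).
  by apply: F_ext => -[|c u] //=; rewrite addnA.
ring.
Qed.

Section Words.
Local Open Scope nat_scope.

Lemma nth_rotw (v : word) r t : r < size v -> t < size v ->
  nth 0 (rot r v) t = nth 0 v ((r + t) %% size v).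
Proof.
move=> hr ht; rewrite /rot nth_cat size_drop.
case: ifP => h.
  by rewrite nth_drop modn_small //; lia.
rewrite nth_take; last by lia.
have -> : r + t = (t - (size v - r)) + size v by lia.
by rewrite modnDr modn_small //; lia.
Qed.

Lemma mkseqP (s : word) h m : size s = m -> (forall t, t < m -> nth 0 s t = h t) ->
  s = mkseq h m.
Proof.
move=> hs hn; apply: (@eq_from_nth _ 0) => [|t]; rewrite ?size_mkseq // => lt.
by rewrite nth_mkseq -?hs // hn // -hs.
Qed.

Lemma mkseq_ext (g1 g2 : nat -> nat) m : (forall t, t < m -> g1 t = g2 t) ->
  mkseq g1 m = mkseq g2 m.
Proof.
move=> H; rewrite /mkseq; apply/eq_in_map => t; rewrite mem_iota => /andP[_ lt]; exact: H.
Qed.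

Definition cwd r (v : word) : word := (head 0 (rot r v)).+1 :: behead (rot r v).
Definition swd r j (v : word) : word := ((head 0 (rot r v)).+1 - j) :: rcons (behead (rot r v)) j.
Definition dwd r (v : word) : word :=
  (nth 0 (rot r v) 0 + nth 0 (rot r v) 1) :: drop 2 (rot r v).

Lemma head_rotw (v : word) r : r < size v -> head 0 (rot r v) = nth 0 v (r %% size v).
Proof. move=> hr; rewrite -nth0 nth_rotw ?addn0 //; lia. Qed.

Lemma cwd_mkseq v r : r < size v ->
  cwd r v = mkseq (fun t => nth 0 v ((r + t) %% size v) + (t == 0)) (size v).
Proof.
move=> hr; apply: mkseqP => [|[|t] lt] /=.
- rewrite size_behead size_rot; lia.
- by rewrite head_rotw // addn0 addn1.
- by rewrite nth_behead nth_rotw // addn0.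
Qed.

Lemma swd_mkseq v r j : r < size v ->
  swd r j v = mkseq (fun t => if t == 0 then (nth 0 v (r %% size v)).+1 - j
     else if t == size v then j else nth 0 v ((r + t) %% size v)) (size v).+1.
Proof.
move=> hr; apply: mkseqP => [|[|t] lt] /=.
- rewrite size_rcons size_behead size_rot; lia.
- by rewrite head_rotw.
- rewrite nth_rcons size_behead size_rot.
  case: ifP => h1.
    rewrite nth_behead nth_rotw //; last by lia.
    by have -> : (t.+1 == size v) = false by lia.
  have -> : t == (size v).-1 by lia.
  by have -> : t.+1 == size v by lia.
Qed.

Lemma dwd_mkseq v r : 1 < size v -> r < size v ->
  dwd r v = mkseq (fun t => if t == 0 then nth 0 v (r %% size v) + nth 0 v ((r + 1) %% size v)
     else nth 0 v ((r + t + 1) %% size v)) (size v).-1.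
Proof.
move=> h1 hr; apply: mkseqP => [|[|t] lt] /=.
- rewrite size_drop size_rot; lia.
- by rewrite !nth_rotw ?addn0 //; lia.
- rewrite nth_drop nth_rotw; last by lia.
  by have -> : r + (2 + t) = r + t.+1 + 1 by lia.
  done.
Qed.

Definition merge (g : nat -> nat) p t :=
  if t < p then g t else if t == p then g p + g p.+1 else g t.+1.

Lemma mergew_mkseq g m p : p.+1 < m -> mergew p (mkseq g m) = mkseq (merge g p) m.-1.
Proof.
move=> hp; apply: mkseqP => [|t lt].
  rewrite /mergew size_cat /= size_take size_drop size_mkseq.
  have -> : p < m by lia. lia.
rewrite /mergew nth_cat size_take size_mkseq /merge.
have -> : p < m by lia.
case: ifP => h1; first by rewrite nth_take // nth_mkseq //; lia.
case: ifP => h2.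
  have -> : t - p = 0 by lia.
  by rewrite /= !nth_mkseq //; lia.
have -> : t - p = (t - p - 1).+1 by lia.
rewrite /= nth_drop nth_mkseq; last by lia.
congr g; lia.
Qed.

Lemma dS_mkseq g m : 0 < m -> dS (mkseq g m) = [seq mkseq (merge g p) m.-1 | p <- iota 0 m.-1].
Proof.
move=> hm; rewrite /dS size_mkseq; apply/eq_in_map => p; rewrite mem_iota => /andP[_ lt].
apply: mergew_mkseq; lia.
Qed.

End Words.

Lemma rot1_sum (V : nmodType) (g : nat -> V) n :
  \sum_(0 <= i < n) g ((i.+1) %% n)%N = \sum_(0 <= i < n) g i.
Proof.
case: n => [|n]; first by rewrite !big_geq.
rewrite big_nat_recr //= modnn big_nat_recl // addrC; congr (_ + _).
by apply: eq_big_nat => i /andP[_ lt]; rewrite modn_small.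
Qed.

Lemma rot_sum (V : nmodType) (h : nat -> V) n q :
  \sum_(0 <= i < n) h ((i + q) %% n)%N = \sum_(0 <= i < n) h i.
Proof.
elim: q h => [|q IH] h.
  by apply: eq_big_nat => i /andP[_ lt]; rewrite addn0 modn_small.
rewrite -(IH h) -(rot1_sum _ (fun k => h ((k + q) %% n)%N)).
by apply: eq_big_nat => i _ /=; rewrite modnDml addSn addnS.
Qed.

Definition dg (f : nat -> nat) m s : nat :=
  if s == 0%N then (f m + f (m + 1))%N else f (m + s + 1)%N.

Section Comb.
Variables (f : nat -> nat) (N : nat).
Hypothesis hN : (0 < N)%N.
Hypothesis hf : forall x, f (x %% N.+1)%N = f x.

Lemma fper x y : x = (y + N.+1)%N -> f x = f y.
Proof. by move=> ->; rewrite -hf modnDr hf. Qed.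

Lemma fmodl x y : f (x %% N.+1 + y)%N = f (x + y)%N.
Proof. by rewrite -hf modnDml hf. Qed.

Lemma dg_mod x s : dg f (x %% N.+1)%N s = dg f x s.
Proof. by rewrite /dg; case: eqP => _; rewrite ?hf ?fmodl // -addnA fmodl addnA. Qed.

Lemma modE2 x : (N <= x)%N -> (x < N + N)%N -> (x %% N = x - N)%N.
Proof.
move=> h1 h2; have -> : x = ((x - N) + N)%N by lia.
rewrite modnDr modn_small; lia.
Qed.

Lemma comb1 (H : word -> {poly rat}) :
  \sum_(0 <= i < N.+1) \sum_(0 <= p < N) H (mkseq (merge (fun t => f (i + t) + (t == 0%N))%N p) N)
  = \sum_(0 <= m < N.+1) \sum_(0 <= r < N) H (mkseq (fun t => dg f m ((r + t) %% N) + (t == 0%N))%N N).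
Proof.
rewrite (eq_bigr (fun i => H (mkseq (merge (fun t => f (i + t) + (t == 0%N))%N 0) N) +
   \sum_(1 <= p < N) H (mkseq (merge (fun t => f (i + t) + (t == 0%N))%N p) N))); last first.
  by move=> i _; rewrite big_ltn.
rewrite [RHS](eq_bigr (fun m => H (mkseq (fun t => dg f m ((0 + t) %% N) + (t == 0%N))%N N) +
   \sum_(1 <= r < N) H (mkseq (fun t => dg f m ((r + t) %% N) + (t == 0%N))%N N))); last first.
  by move=> i _; rewrite big_ltn.
rewrite !big_split /=; congr (_ + _).
  apply: eq_bigr => i _; congr H; apply: mkseq_ext => t lt.
  rewrite add0n modn_small // /merge /dg.
  case: t lt => [|t] lt /=.
    rewrite !addn0; lia.
  by rewrite !addn0; congr f; lia.
rewrite exchange_big_nat [RHS]exchange_big_nat [RHS]big_nat_rev.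
apply: eq_big_nat => p /andP[hp1 hp2].
rewrite -[RHS](rot_sum _ _ _ p); apply: eq_big_nat => i _.
congr H; apply: mkseq_ext => t lt.
rewrite dg_mod.
have -> : (1 + N - p.+1 = N - p)%N by lia.
rewrite /merge /dg.
case: (ltngtP t p) => htp.
- rewrite modn_small; last by lia.
  have -> : (N - p + t == 0)%N = false by lia.
  by rewrite (fper (i + p + (N - p + t) + 1) (i + t)) //; lia.
- rewrite modE2; try lia.
  have -> : (N - p + t - N == 0)%N = false by lia.
  have -> : (t == 0)%N = false by lia.
  have e : (i + p + (N - p + t - N) + 1 = i + t.+1)%N by lia.
  by rewrite /= e addn0.
- subst t. have -> : (N - p + p = 0 + N)%N by lia.
  rewrite modnDr mod0n /=.
  have -> : (p == 0)%N = false by lia.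
  by rewrite !addn0 addnS addn1.
Qed.

Hypothesis hpos : forall x, (0 < f x)%N.

Definition sg i j t : nat :=
  if t == 0%N then ((f i).+1 - j)%N else if t == N.+1 then j else f (i + t)%N.
Definition Lw i j p := mkseq (merge (sg i j) p) N.+1.
Definition Rw m r j := mkseq (fun t => if t == 0%N then ((dg f m r).+1 - j)%N
   else if t == N then j else dg f m ((r + t) %% N)%N) N.+1.
Definition Cwd i := mkseq (fun t => f (i + t) + (t == 0%N))%N N.+1.

Lemma iota_split a b : (0 < a)%N -> (0 < b)%N ->
  iota 1 (a + b).-1 = iota 1 a.-1 ++ a :: [seq (a + j)%N | j <- iota 1 b.-1].
Proof.
move=> ha hb.
have -> : ((a + b).-1 = a.-1 + (b.-1).+1)%N by lia.
rewrite iotaD; congr (_ ++ _).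
have -> : (1 + a.-1 = a)%N by lia.
by rewrite /= -iotaDl addn1.
Qed.

Lemma W3 i j t : (0 < j)%N -> (j < f i)%N -> (t < N.+1)%N ->
  merge (sg i j) 0 t = (if t == 0%N then ((dg f i 0).+1 - j)%N
   else if t == N then j else dg f i ((0 + t) %% N)%N).
Proof.
move=> hj1 hj2; rewrite /merge /sg /dg.
case: t => [|t] lt /=.
  have -> : (1 == N.+1) = false by lia.
  lia.
case: (eqVneq t.+1 N) => e.
  by rewrite e eqxx.
have -> : (t.+2 == N.+1) = false by lia.
rewrite add0n modn_small; last by lia.
by rewrite addnS /= addn1.
Qed.

Lemma W4 i j t : (0 < j)%N -> (j < f i)%N -> (t < N.+1)%N ->
  merge (sg i j) N t = (if t == 0%N then ((dg f ((i + N) %% N.+1) 0).+1 - (f ((i + N) %% N.+1) + j))%N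
   else if t == N then (f ((i + N) %% N.+1) + j)%N else dg f ((i + N) %% N.+1) ((0 + t) %% N)%N).
Proof.
move=> hj1 hj2 lt; rewrite !dg_mod hf /merge /sg /dg.
case: (ltngtP t N) => htN.
- case: t lt htN => [|t] lt htN /=.
    rewrite (fper (i + N + 1) i); last by lia.
    lia.
  have -> : (t.+1 == N.+1) = false by lia.
  rewrite modn_small; last by lia.
  rewrite /=; symmetry; apply: fper; lia.
- lia.
- subst t; have -> : (N == 0%N) = false by lia.
  by rewrite eqxx /= (_ : (N == N.+1) = false) //; lia.
Qed.

Lemma W5 i t : (t < N.+1)%N ->
  (f (i + t) + (t == 0%N))%N = (if t == 0%N then ((dg f ((i + N) %% N.+1) 0).+1 - (f ((i + N) %% N.+1)))%N
   else if t == N then (f ((i + N) %% N.+1))%N else dg f ((i + N) %% N.+1) ((0 + t) %% N)%N).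
Proof.
move=> lt; rewrite !dg_mod hf /dg.
case: t lt => [|t] lt /=.
  rewrite (fper (i + N + 1) i); last by lia.
  rewrite addn0; lia.
case: (eqVneq t.+1 N) => e.
  by rewrite e addn0.
rewrite modn_small; last by lia.
rewrite /= addn0; symmetry; apply: fper; lia.
Qed.

Lemma W6 i j p t : (0 < j)%N -> (j < f i)%N -> (t < N.+1)%N -> (0 < p)%N -> (p < N)%N ->
  merge (sg i j) p t = (if t == 0%N then ((dg f ((i + p) %% N.+1) (1 + N - p.+1)).+1 - j)%N
   else if t == N then j else dg f ((i + p) %% N.+1) ((1 + N - p.+1 + t) %% N)%N).
Proof.
move=> hj1 hj2 lt hp1 hp2; rewrite !dg_mod.
have -> : (1 + N - p.+1 = N - p)%N by lia.
rewrite /merge /sg /dg.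
have -> : (N - p == 0)%N = false by lia.
case: (ltngtP t p) => htp.
- case: t lt htp => [|t] lt htp /=.
    by rewrite (fper (i + p + (N - p) + 1) i) //; lia.
  have -> : (t.+1 == N.+1) = false by lia.
  have -> : (t.+1 == N) = false by lia.
  rewrite modn_small; last by lia.
  have -> : (N - p + t.+1 == 0)%N = false by lia.
  symmetry; apply: fper; lia.
- have -> : (t == 0%N) = false by lia.
  case: (eqVneq t N) => e.
    by subst t; rewrite eqxx.
  have -> : (t.+1 == N.+1) = false by lia.
  rewrite modE2; try lia.
  have -> : (N - p + t - N == 0)%N = false by lia.
  have e2 : (i + p + (N - p + t - N) + 1 = i + t.+1)%N by lia.
  by rewrite e2.
- subst t.
  have -> : (p == 0%N) = false by lia.
  have -> : (p == N.+1) = false by lia.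
  have -> : (p == N) = false by lia.
  have -> : (p.+1 == N.+1) = false by lia.
  have -> : (N - p + p = 0 + N)%N by lia.
  by rewrite modnDr mod0n eqxx /= addn1 addnS.
Qed.

Lemma comb2 (H : word -> {poly rat}) :
  \sum_(0 <= i < N.+1) \sum_(j <- iota 1 (f i).-1) \sum_(0 <= p < N.+1) H (Lw i j p)
  + \sum_(0 <= i < N.+1) H (Cwd i)
  = \sum_(0 <= m < N.+1) \sum_(0 <= r < N) \sum_(j <- iota 1 (dg f m r).-1) H (Rw m r j).
Proof.
under eq_bigr => i _ do under eq_bigr => j _ do rewrite big_ltn // big_nat_recr //.
under [RHS]eq_bigr => m _ do rewrite big_ltn //.
rewrite [RHS]big_split /=.
under eq_bigr => i _ do rewrite !big_split /=.
rewrite !big_split /=.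
set A0 := \sum_(0 <= i < N.+1) \sum_(j <- _) H (Lw i j 0).
set M := \sum_(0 <= i < N.+1) \sum_(j <- _) \sum_(1 <= p < N) H (Lw i j p).
set AN := \sum_(0 <= i < N.+1) \sum_(j <- _) H (Lw i j N).
set SC := \sum_(0 <= i < N.+1) H (Cwd i).
set T0 := \sum_(0 <= i < N.+1) \sum_(j <- _) H (Rw i 0 j).
set TM := \sum_(0 <= i < N.+1) \sum_(1 <= r < N) _.
have hjr : forall k j, j \in iota 1 (f k).-1 -> (0 < j)%N && (j < f k)%N.
  move=> k j; rewrite mem_iota => /andP[h1 h2]; apply/andP; split; first by [].
  have := hpos k; lia.
have eM : M = TM.
  rewrite /M /TM.
  under eq_bigr => i _ do rewrite exchange_big.
  rewrite exchange_big_nat [RHS]exchange_big_nat [RHS]big_nat_rev.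
  apply: eq_big_nat => p /andP[hp1 hp2].
  rewrite -[RHS](rot_sum _ _ _ p); apply: eq_big_nat => i _ /=.
  have -> : dg f ((i + p) %% N.+1)%N (1 + N - p.+1)%N = f i.
    rewrite dg_mod /dg; have -> : (1 + N - p.+1 == 0)%N = false by lia.
    apply: fper; lia.
  apply: eq_big_seq => j /hjr /andP[hj1 hj2].
  congr H; rewrite /Lw /Rw; apply: mkseq_ext => t lt; rewrite W6 //; lia.
have e0 : A0 + AN + SC = T0.
  rewrite /T0.
  under eq_bigr => m _ do rewrite [dg f m 0]/dg eqxx iota_split // big_cat big_cons big_map.
  rewrite !big_split /= -addrA [AN + _]addrC /A0 /AN /SC; congr (_ + (_ + _)).
  - apply: eq_bigr => i _; apply: eq_big_seq => j /hjr /andP[hj1 hj2].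
    congr H; rewrite /Lw /Rw; apply: mkseq_ext => t lt; rewrite W3 //; lia.
  - rewrite -[RHS](rot_sum _ _ _ N); apply: eq_bigr => i _.
    congr H; rewrite /Cwd /Rw; apply: mkseq_ext => t lt; rewrite W5 //; lia.
  - rewrite -[RHS](rot_sum _ _ _ N); apply: eq_bigr => i _.
    have -> : f ((i + N) %% N.+1 + 1)%N = f i by rewrite fmodl; apply: fper; lia.
    apply: eq_big_seq => j /hjr /andP[hj1 hj2].
    congr H; rewrite /Lw /Rw; apply: mkseq_ext => t lt; rewrite W4 //; lia.
rewrite -eM -e0; ring.
Qed.

End Comb.

Lemma eqv_pr x y : (forall G, pr x G = pr y G) -> eqv x y.
Proof.
move=> h u; have := h (fun v => (v == u)%:R); rewrite /pr /coefw.
have e : forall z : elt, \sum_(p <- z | p.2 == u) p.1 = \sum_(p <- z) p.1 * (p.2 == u)%:R.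
  by move=> z; rewrite big_mkcond; apply: eq_bigr => p _; case: eqP; rewrite ?mulr1 ?mulr0.
by rewrite !e.
Qed.

Lemma pr_St y G : pr (St y) G = pr y (fun v => F v G).
Proof. by rewrite /St pr_linext. Qed.

Lemma io k : iota 0 k = index_iota 0 k.
Proof. by rewrite /index_iota subn0. Qed.

Theorem lemma5p3 (w : word) :
  (0 < size w)%N -> all (fun k => 0 < k)%N w ->
  (eqv (ddt (St (Cw w)))
       (if size w == 1%N then [::] else St (C (deltaw w))))
  /\
  (eqv (ddt (St (Sigmaw w)))
       (if size w == 1%N then [:: (((sumn w).-1)%:R%:P, [:: (sumn w).+1])]
        else St (Sigma (deltaw w)) ++ scale (-1) (St (Cw w)))).
Proof.
move=> hw hall.
have LC : forall G, pr (ddt (St (Cw w))) G = \sum_(i <- iota 0 (size w)) D (cwd i w) G.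
  move=> G; rewrite /St pr_ddt_linext /Cw big_map; apply: eq_bigr => i _ /=.
  by rewrite derivC mul0r add0r mul1r.
have LS : forall G, pr (ddt (St (Sigmaw w))) G =
    \sum_(i <- iota 0 (size w)) \sum_(j <- iota 1 (head 0%N (rot i w)).-1) D (swd i j w) G.
  move=> G; rewrite /St pr_ddt_linext /Sigmaw big_flatten big_map; apply: eq_bigr => i _ /=.
  rewrite big_map; apply: eq_bigr => j _ /=.
  by rewrite derivC mul0r add0r mul1r.
case: (eqVneq (size w) 1%N) => hs.
  case: w hw hall hs LC LS => [|k [|]] //= _ _ _ LC LS.
  split; apply: eqv_pr => G.
    by rewrite LC big_seq1 lemA /dS /= big_nil pr_nil.
  rewrite LS big_seq1 /=.
  transitivity (\sum_(j <- iota 1 k.-1) G [:: k.+1]).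
    apply: eq_big_seq => j; rewrite mem_iota => /andP[h1 h2].
    rewrite lemA /dS /= big_seq1 /mergew /= F_cons !F_nil /= mulr0 addr0.
    by congr G; congr (_ :: _); lia.
  have -> : iota 1 k.-1 = index_iota 1 k by rewrite /index_iota subn1.
  by rewrite sumr_const_nat /pr big_seq1 /= addn0 polyC_natr mulr_natl subn1.
have [N hn] : exists N, size w = N.+1 by exists (size w).-1; lia.
have hN : (0 < N)%N by lia.
pose f := fun x => nth 0%N w (x %% N.+1).
have hf : forall x, f (x %% N.+1)%N = f x by move=> x; rewrite /f modn_mod.
have hpos : forall x, (0 < f x)%N.
  move=> x; move/(all_nthP 0%N): hall => ha; apply: ha; by rewrite hn ltn_pmod.
have hdw : forall m, (m < N.+1)%N -> dwd m w = mkseq (dg f m) N.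
  by move=> m hm; rewrite dwd_mkseq ?hn.
split; apply: eqv_pr => G.
  have L1 : \sum_(i <- iota 0 (size w)) D (cwd i w) G = \sum_(0 <= i < N.+1)
     \sum_(0 <= p < N) F (mkseq (merge (fun t => f (i + t) + (t == 0%N))%N p) N) G.
    rewrite hn io; apply: eq_big_nat => i /andP[_ hi].
    rewrite lemA cwd_mkseq ?hn // dS_mkseq // big_map.
    have -> : (N.+1).-1 = N by [].
    rewrite io; apply: eq_bigr => p _. reflexivity.
  have R1 : pr (St (C (deltaw w))) G = \sum_(0 <= m < N.+1) \sum_(0 <= r < N)
      F (mkseq (fun t => dg f m ((r + t) %% N) + (t == 0%N))%N N) G.
    rewrite pr_St /C pr_linext /deltaw big_map hn io; apply: eq_big_nat => m /andP[_ hm].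
    rewrite mul1r -/(dwd m w) hdw // /pr /Cw big_map size_mkseq io.
    apply: eq_big_nat => r /andP[_ hr]; rewrite mul1r -/(cwd r _) cwd_mkseq size_mkseq //.
    congr F; apply: mkseq_ext => t ht; rewrite nth_mkseq // ltn_pmod //.
  by rewrite LC L1 R1; exact: (@comb1 f N hN hf (fun v => F v G)).
have L2 : \sum_(i <- iota 0 (size w)) \sum_(j <- iota 1 (head 0%N (rot i w)).-1) D (swd i j w) G
   = \sum_(0 <= i < N.+1) \sum_(j <- iota 1 (f i).-1) \sum_(0 <= p < N.+1) F (Lw f N i j p) G.
  rewrite hn io; apply: eq_big_nat => i /andP[_ hi].
  rewrite head_rotw ?hn //; apply: eq_bigr => j _.
  rewrite lemA swd_mkseq ?hn // dS_mkseq // big_map.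
  have -> : (N.+2).-1 = N.+1 by [].
  rewrite io; apply: eq_bigr => p _; reflexivity.
have R2 : pr (St (Sigma (deltaw w)) ++ scale (-1) (St (Cw w))) G =
   \sum_(0 <= m < N.+1) \sum_(0 <= r < N) \sum_(j <- iota 1 (dg f m r).-1) F (Rw f N m r j) G
   - \sum_(0 <= i < N.+1) F (Cwd f N i) G.
  rewrite pr_cat pr_scale !pr_St mulN1r; congr (_ - _).
    rewrite /Sigma pr_linext /deltaw big_map hn io; apply: eq_big_nat => m /andP[_ hm].
    rewrite mul1r -/(dwd m w) hdw // /pr /Sigmaw big_flatten big_map size_mkseq io.
    apply: eq_big_nat => r /andP[_ hr]; rewrite big_map.
    rewrite head_rotw size_mkseq ?modn_small ?nth_mkseq //.
    apply: eq_bigr => j _; rewrite /= mul1r.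
    have hr' : (r < size (mkseq (dg f m) N))%N by rewrite size_mkseq.
    have E := @swd_mkseq _ r j hr'.
    rewrite /swd head_rotw ?size_mkseq ?modn_small ?nth_mkseq // in E.
    rewrite E.
    by congr F; apply: mkseq_ext => t ht; rewrite nth_mkseq // ltn_pmod.
  rewrite /pr /Cw big_map hn io; apply: eq_big_nat => i /andP[_ hi].
  rewrite mul1r -/(cwd i w) cwd_mkseq ?hn //.
rewrite LS L2 R2 -(@comb2 f N hN hf hpos (fun v => F v G)).
by rewrite addrK.
Qed.
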